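(* Let $D\ge1$, let $Q_D$ be the $D$-dimensional hypercube on $X=\{0,1\}^D$ with adjacency matrix $A$. The set $$\{I,\alpha_1,\ldots,\alpha_D\}\cup\{\alpha^*_iA\alpha^*_j-\alpha^*_jA\alpha^*_i\mid 1\le i<j\le D\}$$ is a basis for the space of $A$-like matrices of $Q_D$. In particular this space has dimension $1+D+\binom{D}{2}$.
   Context: $Q_D$ is the graph with vertex set $X=\{0,1\}^D$, two vertices adjacent iff they differ in exactly one coordinate. Matrices are real with rows and columns indexed by $X$; $I$ is the identity. A matrix $B$ is $A$-like if $BA=AB$ and $B_{xy}=0$ for all $x,y\in X$ that are neither equal nor adjacent. For $1\le i\le D$, $\alpha_i$ has $(x,y)$-entry $1$ if $x,y$ differ in the $i$-th coordinate and agree in all others, and $0$ otherwise; $\alpha^*_i$ is the diagonal matrix with $(x,x)$-entry $1$ if $x_i=0$ and $-1$ if $x_i=1$. *)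

(* Defs.v *)
From HB Require Import structures.
From mathcomp Require Import all_boot all_order all_algebra.
Unset Printing Implicit Defensive.
Import Order.TTheory GRing.Theory Num.Theory.
Local Open Scope ring_scope.

(* Vertex set X = {0,1}^D, coordinates indexed by 'I_D (coordinate i+1 of the
   paper is index i here); false = 0, true = 1. *)
Definition cube (D : nat) : finType := {ffun 'I_D -> bool}.

(* Number of vertices; matrices indexed by X are 'M_(nv D), the vertex x
   corresponding to the row/column index enum_rank x. *)
Definition nv (D : nat) : nat := #|{: cube D}|.

Definition vx {D : nat} (i : 'I_(nv D)) : cube D := enum_val i.
Definition ix {D : nat} (x : cube D) : 'I_(nv D) := enum_rank x.

Definition adjacent {D : nat} (x y : cube D) : bool :=
  #|[set k : 'I_D | x k != y k]| == 1%N.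

Definition adjA (R : realFieldType) (D : nat) : 'M[R]_(nv D) :=
  \matrix_(i, j) (if adjacent (vx i) (vx j) then 1 else 0).

Definition A_like (R : realFieldType) (D : nat) (B : 'M[R]_(nv D)) : Prop :=
  B *m adjA R D = adjA R D *m B /\
  (forall x y : cube D, x != y -> ~~ adjacent x y -> B (ix x) (ix y) = 0).

Definition alpha (R : realFieldType) (D : nat) (i : 'I_D) : 'M[R]_(nv D) :=
  \matrix_(a, b)
    (if (vx a i != vx b i) && [forall k, (k != i) ==> (vx a k == vx b k)]
     then 1 else 0).

Definition alphas (R : realFieldType) (D : nat) (i : 'I_D) : 'M[R]_(nv D) :=
  \matrix_(a, b) (if a == b then (if vx a i then -1 else 1) else 0).

Definition commAs (R : realFieldType) (D : nat) (i j : 'I_D) : 'M[R]_(nv D) :=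
  alphas R D i *m adjA R D *m alphas R D j - alphas R D j *m adjA R D *m alphas R D i.

Definition cube_basis (R : realFieldType) (D : nat) : seq 'M[R]_(nv D) :=
  [:: 1%:M] ++ [seq alpha R D i | i <- enum 'I_D]
  ++ [seq commAs R D i j | i : 'I_D <- enum 'I_D, j : 'I_D <- [seq j : 'I_D <- enum 'I_D | (i < j)%N]].

(* Main.v *)
Require Import Defs.
From HB Require Import structures.
From mathcomp Require Import all_boot all_order all_algebra.
From mathcomp Require Import ring lra zify.
Import Order.TTheory GRing.Theory Num.Theory.
Local Open Scope ring_scope.
Set Implicit Arguments. Unset Strict Implicit.

Section Cube.
Variable D : nat.
Implicit Types x y z : cube D.

Definition flip x (k : 'I_D) : cube D := [ffun l => if l == k then ~~ x l else x l].
Definition zero : cube D := [ffun _ => false].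

Lemma flipE x k l : flip x k l = if l == k then ~~ x l else x l.
Proof. by rewrite ffunE. Qed.

Lemma flipK k : involutive (flip^~ k).
Proof. move=> x; apply/ffunP=> l; rewrite !flipE; case: (l == k) => //; exact: negbK. Qed.

Lemma flipC x i j : flip (flip x i) j = flip (flip x j) i.
Proof. apply/ffunP=> l; rewrite !flipE; by case: (l == i); case: (l == j). Qed.

Lemma flip_eq x y k : (flip x k == y) = (x == flip y k).
Proof. by apply/eqP/eqP => [<-|->]; rewrite flipK. Qed.

Lemma flip_neq x k : flip x k != x.
Proof. apply/eqP => /ffunP /(_ k); rewrite flipE eqxx; by case: (x k). Qed.

Lemma cube_ind (P : cube D -> Prop) :
  P zero -> (forall x k, P x -> P (flip x k)) -> forall x, P x.
Proof.
move=> P0 Pf.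
suff H : forall (s : seq 'I_D) x, (forall k, x k -> k \in s) -> P x.
  by move=> x; apply: (H (enum 'I_D)) => k _; rewrite mem_enum.
elim=> [|k s IH] x Hx.
  have -> : x = zero; last by [].
  by apply/ffunP=> l; rewrite ffunE; case: (boolP (x l)) => // /Hx.
case: (boolP (x k)) => xk.
  rewrite -(flipK k x); apply: Pf; apply: IH => l.
  rewrite flipE; case: (eqVneq l k) => [-> |lk]; first by rewrite xk.
  by move=> /Hx; rewrite inE (negPf lk).
apply: IH => l xl; move: (Hx l xl); rewrite inE; case: (eqVneq l k) => //= Elk.
by rewrite -Elk xl in xk.
Qed.

Definition dset x y : {set 'I_D} := [set l | x l != y l].

Lemma adjacentP x y : reflect (exists k, y = flip x k) (adjacent x y).
Proof.
apply: (iffP idP).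
  rewrite /adjacent => /cards1P [k Hk]; exists k; apply/ffunP => l.
  rewrite flipE; case: (eqVneq l k) => [->|lk].
    have : k \in [set k0 | x k0 != y k0] by rewrite Hk inE.
    by rewrite inE; case: (x k); case: (y k).
  have : l \notin [set k0 | x k0 != y k0] by rewrite Hk inE.
  by rewrite inE negbK => /eqP.
move=> [k ->]; rewrite /adjacent; apply/cards1P; exists k; apply/setP => l.
rewrite !inE flipE; case: (l == k); by case: (x l).
Qed.

Lemma adjacent_flip x k : adjacent x (flip x k).
Proof. by apply/adjacentP; exists k. Qed.

Lemma adjacent_sym x y : adjacent x y = adjacent y x.
Proof.
by apply/adjacentP/adjacentP => [[k ->]|[k ->]]; exists k; rewrite flipK.
Qed.

End Cube.

Section Mat.
Variable R : realFieldType.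
Variable D : nat.
Implicit Types x y z : cube D.
Local Notation M := 'M[R]_(nv D).

Lemma vxK : cancel (@vx D) (@ix D).
Proof. exact: enum_valK. Qed.
Lemma ixK : cancel (@ix D) (@vx D).
Proof. exact: enum_rankK. Qed.

Lemma sum_cube (F : 'I_(nv D) -> R) : \sum_c F c = \sum_y F (ix y).
Proof. by rewrite (reindex (@ix D)) //; exists (@vx D) => c _; [exact: ixK|exact: vxK]. Qed.

Lemma flip_inj x : injective (flip x).
Proof.
move=> i j E; apply/eqP; apply/negPn/negP => ij.
move/ffunP: E => /(_ i); rewrite !flipE eqxx (negPf ij); by case: (x i).
Qed.

Lemma sum_adj (G : cube D -> R) z :
  \sum_y (if adjacent y z then 1 else 0) * G y = \sum_k G (flip z k).
Proof.
rewrite (eq_bigr (fun y => if adjacent y z then G y else 0)); last by move=> y _; case: adjacent; rewrite ?mul1r ?mul0r.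
rewrite -big_mkcond /=.
rewrite (eq_bigl (fun y => y \in (flip z) @: setT)).
  by rewrite big_imset //=; [apply: eq_bigl => k; rewrite inE | move=> i j _ _; exact: flip_inj].
move=> y /=; rewrite adjacent_sym; apply/adjacentP/imsetP => [[k ->]|[k _ ->]]; by exists k.
Qed.

Lemma adjA_E x y : adjA R D (ix x) (ix y) = if adjacent x y then 1 else 0.
Proof. by rewrite mxE !ixK. Qed.

Lemma mulBA_E (B : M) x z : (B *m adjA R D) (ix x) (ix z) = \sum_k B (ix x) (ix (flip z k)).
Proof.
rewrite mxE sum_cube -(sum_adj (fun y => B (ix x) (ix y))); apply: eq_bigr => y _; rewrite adjA_E mulrC; by case: adjacent; rewrite ?mulr1 ?mulr0 ?mul1r ?mul0r.
Qed.

Lemma mulAB_E (B : M) x z : (adjA R D *m B) (ix x) (ix z) = \sum_k B (ix (flip x k)) (ix z).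
Proof.
rewrite mxE sum_cube -(sum_adj (fun y => B (ix y) (ix z))); apply: eq_bigr => y _; rewrite adjA_E adjacent_sym; by case: adjacent; rewrite ?mulr1 ?mulr0 ?mul1r ?mul0r.
Qed.

Lemma matrix_cubeP (B C : M) : (forall x y, B (ix x) (ix y) = C (ix x) (ix y)) -> B = C.
Proof. by move=> H; apply/matrixP => a b; rewrite -(vxK a) -(vxK b). Qed.

Lemma commuteE (B : M) : B *m adjA R D = adjA R D *m B <->
  (forall x z, \sum_k B (ix x) (ix (flip z k)) = \sum_k B (ix (flip x k)) (ix z)).
Proof.
split=> [H x z|H]; first by rewrite -mulBA_E H mulAB_E.
by apply: matrix_cubeP => x y; rewrite mulBA_E mulAB_E.
Qed.

End Mat.

Section Alike.
Variable R : realFieldType.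
Variable D : nat.
Implicit Types x y z : cube D.
Local Notation M := 'M[R]_(nv D).
Variable B : M.
Hypothesis HB : A_like R D B.

Definition Fw k x := B (ix x) (ix (flip x k)).
Definition dg x := B (ix x) (ix x).

Lemma two_diff x y i j : i != j -> x i != y i -> x j != y j -> B (ix x) (ix y) = 0.
Proof.
move=> ij xi xj; apply: HB.2.
  by apply/eqP => E; rewrite E eqxx in xi.
apply/negP => /adjacentP [k E]; move: xi xj; rewrite E !flipE.
case: (eqVneq i k) => [Eik|ik]; last by rewrite eqxx.
rewrite -Eik (eq_sym j i) (negPf ij) eqxx //.
Qed.

Lemma comm_sum x z : \sum_k B (ix x) (ix (flip z k)) = \sum_k B (ix (flip x k)) (ix z).
Proof. exact: (proj1 (commuteE B) HB.1). Qed.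

Lemma dg_flip x i : dg (flip x i) = dg x.
Proof.
have := comm_sum x (flip x i).
rewrite [in X in X = _ -> _](bigD1 i) //= flipK [in X in _ = X -> _](bigD1 i) //=.
rewrite [in X in X = _ -> _]big1 ?addr0; last first.
  move=> k ki; apply: (@two_diff _ _ i k); rewrite 1?eq_sym // !flipE ?eqxx ?(negPf ki) ?(eq_sym i k) ?(negPf ki);
    by case: (x _).
rewrite big1 ?addr0 => [E|k ki]; first by rewrite /dg E.
apply: (@two_diff _ _ i k); rewrite 1?eq_sym // !flipE ?eqxx ?(negPf ki) ?(eq_sym i k) ?(negPf ki) //;
  by case: (x _).
Qed.

Lemma Fw_a x : \sum_k Fw k x = \sum_k Fw k (flip x k).
Proof. by rewrite /Fw comm_sum; apply: eq_bigr => k _; rewrite flipK. Qed.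

Lemma Fw_b x i j : i != j -> Fw i x + Fw j x = Fw j (flip x i) + Fw i (flip x j).
Proof.
move=> ij; have ji : j != i by rewrite eq_sym.
have := comm_sum x (flip (flip x i) j).
rewrite [in X in X = _ -> _](bigD1 i) //= [in X in X = _ -> _](bigD1 j) //=.
rewrite [in X in X = _ -> _]big1 ?addr0; last first.
  move=> k /andP [ki kj]; have ik : i != k by rewrite eq_sym.
  have jk : j != k by rewrite eq_sym.
  apply: (@two_diff _ _ i j) => //; rewrite !flipE ?eqxx ?(negPf ik) ?(negPf jk) ?(negPf ij) ?(negPf ji); by case: (x _).
rewrite [in X in _ = X -> _](bigD1 i) //= [in X in _ = X -> _](bigD1 j) //=.
rewrite [in X in _ = X -> _]big1 ?addr0; last first.
  move=> k /andP [ki kj]; have ik : i != k by rewrite eq_sym.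
  have jk : j != k by rewrite eq_sym.
  apply: (@two_diff _ _ i j) => //; rewrite !flipE ?eqxx ?(negPf ik) ?(negPf jk) ?(negPf ij) ?(negPf ji) ?(negPf ki) ?(negPf kj); by case: (x _).
move=> E; rewrite /Fw [flip (flip x j) i]flipC addrC -E flipK.
by rewrite [flip (flip x i) j]flipC flipK.
Qed.


Definition gF i j x := Fw i (flip x j) - Fw i x.

Lemma gF_flip x i j l : i != j -> gF i j x = 0 -> gF i j (flip x l) = 0.
Proof.
move=> ij; rewrite /gF => g0.
case: (eqVneq l j) => [->|lj]; first by rewrite flipK; lra.
case: (eqVneq l i) => [->|li].
  have h1 := Fw_b (flip x i) ij; have h2 := Fw_b x ij.
  rewrite flipK in h1; lra.
have jl : j != l by rewrite eq_sym.
have il : i != l by rewrite eq_sym.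
have li' : l != i by [].
have h1 := Fw_b x ij; have h2 := Fw_b x jl; have h3 := Fw_b x li'.
have h4 := Fw_b (flip x l) ij; have h5 := Fw_b (flip x i) jl; have h6 := Fw_b (flip x j) li'.
rewrite [flip (flip x l) i]flipC [flip (flip x l) j]flipC in h4.
rewrite [flip (flip x j) i]flipC in h6.
rewrite [flip (flip x l) j]flipC.
lra.
Qed.


Lemma uniq_zero :
  dg (zero D) = 0 -> (forall m, Fw m (zero D) = 0) ->
  (forall m p : 'I_D, (m < p)%N -> Fw m (flip (zero D) p) - Fw m (zero D) = 0) ->
  B = 0.
Proof.
move=> H0 H1 H2.
have Hd : forall x, dg x = 0.
  by apply: cube_ind => // x k; rewrite dg_flip.
have Hg : forall i j x, i != j -> gF i j x = 0.
  move=> i j x ij; move: x; apply: cube_ind; last by move=> x l; exact: gF_flip.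
  rewrite /gF; have := ij; rewrite -val_eqE neq_ltn => /orP [lt|gt].
  - exact: H2.
  - have := Fw_b (zero D) ij; have := H2 _ _ gt; rewrite !H1; lra.
have Hinv : forall i l x, l != i -> Fw i (flip x l) = Fw i x.
  move=> i l x li; have := Hg i l x; rewrite eq_sym /gF => /(_ li); lra.
pose rho i x := Fw i (flip x i) - Fw i x.
have Hrs : forall x, \sum_k rho k x = 0.
  move=> x; rewrite /rho sumrB; have := Fw_a x; lra.
have Hr0 : forall m, rho m (zero D) = 0.
  move=> m; have a0 := Hrs (zero D); have a1 := Hrs (flip (zero D) m).
  rewrite (bigD1 m) //= in a0; rewrite (bigD1 m) //= in a1.
  have E : \sum_(k | k != m) rho k (flip (zero D) m) = \sum_(k | k != m) rho k (zero D).
    apply: eq_bigr => k km; have mk : m != k by rewrite eq_sym.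
    by rewrite /rho [flip (flip _ m) k]flipC !(Hinv k m).
  have E2 : rho m (flip (zero D) m) = - rho m (zero D) by rewrite /rho flipK; lra.
  rewrite E E2 in a1; lra.
have Hr : forall m x, rho m x = 0.
  move=> m; apply: cube_ind => // x l; rewrite /rho.
  case: (eqVneq l m) => [->|lm]; first by rewrite flipK; lra.
  by rewrite [flip (flip x l) m]flipC !(Hinv m l).
have HF : forall m x, Fw m x = 0.
  move=> m; apply: cube_ind => // x l.
  case: (eqVneq l m) => [->|lm]; last by rewrite Hinv.
  by have := Hr m x; rewrite /rho; lra.
apply: matrix_cubeP => x y; rewrite mxE.
case: (eqVneq x y) => [<-|xy]; first exact: Hd.
case: (boolP (adjacent x y)) => [/adjacentP [k ->]|nadj]; first exact: HF.
exact: HB.2.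
Qed.

End Alike.

Section Basis.
Variable R : realFieldType.
Variable D : nat.
Implicit Types x y z : cube D.
Local Notation M := 'M[R]_(nv D).

Definition sg (i : 'I_D) x : R := if x i then -1 else 1.

Lemma sg_flip i k x : sg i (flip x k) = if i == k then - sg i x else sg i x.
Proof. rewrite /sg flipE; case: (i == k) => //; case: (x i) => /=; lra. Qed.

Lemma ix_eq x y : (ix x == ix y) = (x == y).
Proof. exact: (inj_eq (@enum_rank_inj _)). Qed.

Lemma one_E x y : (1%:M : M) (ix x) (ix y) = (x == y)%:R.
Proof. by rewrite mxE ix_eq. Qed.

Lemma alpha_E i x y : alpha R D i (ix x) (ix y) = (y == flip x i)%:R.
Proof.
rewrite mxE !ixK.
suff -> : (x i != y i) && [forall k, (k != i) ==> (x k == y k)] = (y == flip x i).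
  by case: (_ == _).
apply/idP/eqP => [/andP [xi /forallP H]|->].
  apply/ffunP => l; rewrite flipE; case: (eqVneq l i) => [->|li].
    by move: xi; case: (x i); case: (y i).
  by have /implyP /(_ li) /eqP := H l.
rewrite flipE eqxx; apply/andP; split; first by case: (x i).
by apply/forallP => l; apply/implyP => li; rewrite flipE (negPf li).
Qed.

Lemma alphas_E i x y : alphas R D i (ix x) (ix y) = if x == y then sg i x else 0.
Proof. by rewrite mxE ix_eq ixK. Qed.

Lemma diagl_E i (C : M) x y : (alphas R D i *m C) (ix x) (ix y) = sg i x * C (ix x) (ix y).
Proof.
rewrite mxE sum_cube (bigD1 x) //= alphas_E eqxx big1 ?addr0 // => w wx.
by rewrite alphas_E eq_sym (negPf wx) mul0r.
Qed.

Lemma diagr_E i (C : M) x y : (C *m alphas R D i) (ix x) (ix y) = C (ix x) (ix y) * sg i y.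
Proof.
rewrite mxE sum_cube (bigD1 y) //= alphas_E eqxx big1 ?addr0 // => w wy.
by rewrite alphas_E (negPf wy) mulr0.
Qed.

Lemma commAs_E0 i j x y : commAs R D i j (ix x) (ix y) =
  (if adjacent x y then 1 else 0) * (sg i x * sg j y - sg j x * sg i y).
Proof.
rewrite /commAs [LHS]mxE [X in _ + X]mxE !diagr_E !diagl_E adjA_E; case: adjacent; lra.
Qed.

Lemma commAs_E i j x y : i != j -> commAs R D i j (ix x) (ix y) =
  2 * (sg i x * sg j x) * ((y == flip x i)%:R - (y == flip x j)%:R).
Proof.
move=> ij; rewrite commAs_E0; case: (boolP (adjacent x y)) => [/adjacentP [k ->]|na].
  rewrite !(inj_eq (@flip_inj _ x)) !sg_flip.
  case: (eqVneq i k) => [E|ik]; first by subst k; rewrite (eq_sym j i) (negPf ij) /=; lra.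
  case: (eqVneq j k) => [E|jk]; first by subst k; rewrite /=; lra.
  rewrite /=; lra.
have -> : (y == flip x i) = false by apply/negP => /eqP E; rewrite E adjacent_flip in na.
have -> : (y == flip x j) = false by apply/negP => /eqP E; rewrite E adjacent_flip in na.
rewrite /=; lra.
Qed.


Lemma Alike_one : A_like R D 1%:M.
Proof.
split.
  apply/commuteE => x z; apply: eq_bigr => k _; by rewrite !one_E flip_eq.
by move=> x y xy _; rewrite one_E (negPf xy).
Qed.

Lemma Alike_alpha i : A_like R D (alpha R D i).
Proof.
split.
  apply/commuteE => x z; apply: eq_bigr => k _; by rewrite !alpha_E flip_eq flipC.
move=> x y xy na; rewrite alpha_E.
by have -> : (y == flip x i) = false by apply/negP => /eqP E; rewrite E adjacent_flip in na.
Qed.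

Lemma Alike_commAs i j : i != j -> A_like R D (commAs R D i j).
Proof.
move=> ij; have ji : j != i by rewrite eq_sym.
split; last first.
  by move=> x y xy na; rewrite commAs_E0 (negPf na) mul0r.
apply/commuteE => x z.
under eq_bigr do rewrite commAs_E //.
under [RHS]eq_bigr do rewrite commAs_E //.
rewrite [in LHS](bigD1 i) //= [in LHS](bigD1 j) //= [in RHS](bigD1 i) //= [in RHS](bigD1 j) //=.
rewrite [X in _ + (_ + X) = _](eq_bigr (fun k => 2 * (sg i (flip x k) * sg j (flip x k)) *
          ((z == flip (flip x k) i)%:R - (z == flip (flip x k) j)%:R))); last first.
  move=> k /andP [ki kj]; rewrite !flip_eq [flip (flip x i) k]flipC [flip (flip x j) k]flipC.
  rewrite !sg_flip (eq_sym i) (negPf ki) (eq_sym j) (negPf kj) //.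
rewrite !flip_eq !flipK !sg_flip !eqxx (negPf ij) (negPf ji) [flip (flip x j) i]flipC.
ring.
Qed.

Lemma Alike_add (B C : M) : A_like R D B -> A_like R D C -> A_like R D (B + C).
Proof.
move=> [cB sB] [cC sC]; split; first by rewrite mulmxDl mulmxDr cB cC.
by move=> x y xy na; rewrite mxE sB // sC // addr0.
Qed.

Lemma Alike_scale (c : R) (B : M) : A_like R D B -> A_like R D (c *: B).
Proof.
move=> [cB sB]; split; first by rewrite -scalemxAl -scalemxAr cB.
by move=> x y xy na; rewrite mxE sB // mulr0.
Qed.

Lemma Alike_zero : A_like R D (0 : M).
Proof. by split; [rewrite mul0mx mulmx0 | move=> *; rewrite mxE]. Qed.

End Basis.

Section Final.
Variable R : realFieldType.
Variable D : nat.
Implicit Types x y z : cube D.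
Local Notation M := 'M[R]_(nv D).
Local Notation z0 := (zero D).
Local Notation ep p := (flip (zero D) p).

Definition e0 (B : M) := B (ix z0) (ix z0).
Definition e1 m (B : M) := B (ix z0) (ix (ep m)).
Definition e2 m p (B : M) := B (ix (ep p)) (ix (flip (ep p) m)) - B (ix z0) (ix (ep m)).

Lemma entD (B C : M) a b : (B + C) a b = B a b + C a b. Proof. by rewrite mxE. Qed.
Lemma entB (B C : M) a b : (B - C) a b = B a b - C a b. Proof. by rewrite !mxE. Qed.
Lemma entZ c (B : M) a b : (c *: B) a b = c * B a b. Proof. by rewrite mxE. Qed.

Lemma sg0 i : sg R i z0 = 1. Proof. by rewrite /sg ffunE. Qed.
Lemma sgep i p : sg R i (ep p) = if i == p then -1 else 1.
Proof. by rewrite sg_flip sg0. Qed.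

Lemma e0_one : e0 1%:M = 1. Proof. by rewrite /e0 one_E eqxx. Qed.
Lemma e1_one m : e1 m 1%:M = 0.
Proof. by rewrite /e1 one_E eq_sym (negPf (flip_neq _ _)). Qed.
Lemma e2_one m p : e2 m p 1%:M = 0.
Proof. by rewrite /e2 !one_E eq_sym (negPf (flip_neq _ _)) eq_sym (negPf (flip_neq _ _)) subrr. Qed.

Lemma e0_alpha k : e0 (alpha R D k) = 0.
Proof. by rewrite /e0 alpha_E eq_sym (negPf (flip_neq _ _)). Qed.
Lemma e1_alpha m k : e1 m (alpha R D k) = (m == k)%:R.
Proof. by rewrite /e1 alpha_E (inj_eq (@flip_inj _ _)). Qed.
Lemma e2_alpha m p k : e2 m p (alpha R D k) = 0.
Proof. by rewrite /e2 !alpha_E !(inj_eq (@flip_inj _ _)) subrr. Qed.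

Lemma e0_commAs (i j : 'I_D) : i != j -> e0 (commAs R D i j) = 0.
Proof. by move=> ij; rewrite /e0 commAs_E // !(eq_sym z0) !(negPf (flip_neq _ _)) subrr mulr0. Qed.

Lemma e2_commAs (i j m p : 'I_D) : (i < j)%N -> (m < p)%N ->
  e2 m p (commAs R D i j) = if (i == m) && (j == p) then -4 else 0.
Proof.
move=> ij mp; have nij : i != j by rewrite -val_eqE; apply/eqP => E; rewrite E ltnn in ij.
rewrite /e2 !commAs_E // !(inj_eq (@flip_inj _ _)) !sgep !sg0.
have nji : j != i by rewrite eq_sym.
case: (eqVneq i m) => [E|im].
  subst m; rewrite (negPf nij) /=.
  have -> : (i == p) = false by apply/eqP => E; subst p; rewrite ltnn in mp.
  case: (eqVneq j p) => [E|jp] /=; lra.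
have mi : m != i by rewrite eq_sym.
case: (eqVneq j m) => [E|jm].
  subst m; rewrite ?(negPf mi) ?(negPf im) ?eqxx /=.
  have -> : (i == p) = false by apply/eqP => E; subst p; lia.
  have -> : (j == p) = false by apply/eqP => E; subst p; lia.
  rewrite /=; lra.
have mj : m != j by rewrite eq_sym.
rewrite ?(negPf mi) ?(negPf mj) ?(negPf im) ?(negPf jm) /=; lra.
Qed.


Local Notation X := (cube_basis R D).
Local Notation Lt i := [seq j : 'I_D <- enum 'I_D | (i < j)%N].

Lemma mem_one : (1%:M : M) \in X.
Proof. by rewrite /cube_basis mem_cat mem_head. Qed.
Lemma mem_alpha k : alpha R D k \in X.
Proof. by rewrite /cube_basis !mem_cat map_f ?mem_enum ?orbT. Qed.
Lemma mem_commAs (i j : 'I_D) : (i < j)%N -> commAs R D i j \in X.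
Proof.
move=> ij; rewrite /cube_basis !mem_cat; apply/orP; right; apply/orP; right.
by apply: allpairs_f_dep; rewrite ?mem_enum // mem_filter ij mem_enum.
Qed.

Lemma ltn_neq (i j : 'I_D) : (i < j)%N -> i != j.
Proof. by move=> ij; rewrite -val_eqE; apply/eqP => E; rewrite E ltnn in ij. Qed.

Lemma Alike_basis B : B \in X -> A_like R D B.
Proof.
rewrite /cube_basis !mem_cat inE => /orP [/eqP ->|/orP [/mapP [k _ ->]|/allpairsPdep [i [j [_ Hj ->]]]]].
- exact: Alike_one.
- exact: Alike_alpha.
- by apply: Alike_commAs; apply: ltn_neq; move: Hj; rewrite mem_filter => /andP [].
Qed.

Lemma span_Alike B : B \in <<X>>%VS -> A_like R D B.
Proof.
move=> /(@coord_span _ _ _ (in_tuple X)) ->.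
apply: (big_ind (A_like R D)); [exact: Alike_zero|exact: Alike_add|].
move=> i _; apply: Alike_scale; apply: Alike_basis; exact: mem_nth.
Qed.

Lemma e2_sumc (g : 'I_D -> 'I_D -> R) (m p : 'I_D) : (m < p)%N ->
  e2 m p (\sum_(i <- enum 'I_D) \sum_(j <- Lt i) g i j *: commAs R D i j) = - 4 * g m p.
Proof.
move=> mp.
have -> : e2 m p (\sum_(i <- enum 'I_D) \sum_(j <- Lt i) g i j *: commAs R D i j) =
   \sum_(i <- enum 'I_D) \sum_(j <- Lt i) g i j * e2 m p (commAs R D i j).
  rewrite /e2 !summxE -sumrB; apply: eq_bigr => i _; rewrite !summxE -sumrB.
  by apply: eq_bigr => j _; rewrite !entZ mulrBr.
rewrite (bigD1_seq m) ?mem_enum ?enum_uniq //=.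
have -> : \sum_(i <- enum 'I_D | i != m) \sum_(j <- Lt i) g i j * e2 m p (commAs R D i j) = 0.
  apply: big1_seq => i /andP [im _]; apply: big1_seq => j /andP [_]; rewrite mem_filter => /andP [ij _].
  by rewrite e2_commAs // (negPf im) mulr0.
rewrite addr0 (bigD1_seq p) ?mem_filter ?mp ?mem_enum ?filter_uniq ?enum_uniq //=.
have -> : \sum_(j <- Lt m | j != p) g m j * e2 m p (commAs R D m j) = 0.
  apply: big1_seq => j /andP [jp]; rewrite mem_filter => /andP [mj _].
  by rewrite e2_commAs // eqxx (negPf jp) mulr0.
rewrite addr0 e2_commAs // !eqxx mulrC //.
all: by rewrite -?enumT ?mem_enum ?enum_uniq.
Qed.

Lemma e0_sumc (g : 'I_D -> 'I_D -> R) :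
  e0 (\sum_(i <- enum 'I_D) \sum_(j <- Lt i) g i j *: commAs R D i j) = 0.
Proof.
rewrite /e0 summxE big1_seq // => i _; rewrite summxE big1_seq // => j /andP [_].
rewrite mem_filter => /andP [ij _]; rewrite entZ.
by have := e0_commAs (ltn_neq ij); rewrite /e0 => ->; rewrite mulr0.
Qed.

Lemma sum_alpha_e (a : 'I_D -> R) :
  e0 (\sum_(k <- enum 'I_D) a k *: alpha R D k) = 0 /\
  (forall m, e1 m (\sum_(k <- enum 'I_D) a k *: alpha R D k) = a m) /\
  (forall m p, e2 m p (\sum_(k <- enum 'I_D) a k *: alpha R D k) = 0).
Proof.
split; [|split].
- rewrite /e0 summxE big1 // => k _; rewrite entZ.
  by have := e0_alpha k; rewrite /e0 => ->; rewrite mulr0.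
- move=> m; rewrite /e1 summxE (bigD1_seq m) ?mem_enum ?enum_uniq //=.
  have -> : \sum_(k <- enum 'I_D | k != m) (a k *: alpha R D k) (ix z0) (ix (ep m)) = 0.
    apply: big1_seq => k /andP [km _]; rewrite entZ.
    by have := e1_alpha m k; rewrite /e1 => ->; rewrite eq_sym (negPf km) mulr0.
  by rewrite addr0 entZ; have := e1_alpha m m; rewrite /e1 => ->; rewrite eqxx mulr1.
- move=> m p; rewrite /e2 !summxE -sumrB big1 // => k _; rewrite !entZ -mulrBr.
  by have := e2_alpha m p k; rewrite /e2 => ->; rewrite mulr0.
Qed.

Lemma Alike_sub (B C : M) : A_like R D B -> A_like R D C -> A_like R D (B - C).
Proof. by move=> hB hC; apply: Alike_add => //; rewrite -scaleN1r; apply: Alike_scale. Qed.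

Lemma Alike_span B : A_like R D B -> B \in <<X>>%VS.
Proof.
move=> HB.
pose c := e0 B.
pose g i j := - e2 i j B / 4.
pose Sc := \sum_(i <- enum 'I_D) \sum_(j <- Lt i) g i j *: commAs R D i j.
have HSc : Sc \in <<X>>%VS.
  apply: memv_suml => i _; rewrite big_seq; apply: memv_suml => j; rewrite mem_filter => /andP [ij _].
  by apply: memvZ; apply: memv_span; apply: mem_commAs.
have Sc0 : e0 Sc = 0 by apply: e0_sumc.
have Sc2 : forall m p : 'I_D, (m < p)%N -> e2 m p Sc = - 4 * g m p by move=> m p; apply: e2_sumc.
clearbody Sc.
pose a k := e1 k (B - c *: 1%:M - Sc).
pose Sa := \sum_(k <- enum 'I_D) a k *: alpha R D k.
have HSa : Sa \in <<X>>%VS.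
  by apply: memv_suml => k _; apply: memvZ; apply: memv_span; exact: mem_alpha.
have H1 : c *: 1%:M \in <<X>>%VS by apply: memvZ; apply: memv_span; exact: mem_one.
have [Sa0 [Sa1 Sa2]] : e0 Sa = 0 /\ (forall m, e1 m Sa = a m) /\ (forall m p, e2 m p Sa = 0) := sum_alpha_e a.
clearbody Sa.
suff E : B - c *: 1%:M - Sc - Sa = 0.
  move/eqP: E; rewrite subr_eq0 !subr_eq => /eqP ->.
  by apply: memvD; [apply: memvD|].
have HB3 : A_like R D (B - c *: 1%:M - Sc - Sa).
  apply: Alike_sub; last exact: span_Alike.
  apply: Alike_sub; last exact: span_Alike.
  by apply: Alike_sub => //; apply: Alike_scale; apply: Alike_one.
apply: (uniq_zero HB3).
- have : e0 (B - c *: 1%:M - Sc - Sa) = 0; last by [].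
  move: Sc0 Sa0; rewrite /e0 !entB entZ one_E eqxx /c /e0 => -> ->; by rewrite mulr1 !subr0 subrr.
- move=> m; have : e1 m (B - c *: 1%:M - Sc - Sa) = 0; last by [].
  have := Sa1 m; rewrite /a /e1 !entB => ->; exact: subrr.
- move=> m p mp; have : e2 m p (B - c *: 1%:M - Sc - Sa) = 0; last by [].
  have := Sc2 _ _ mp; have := Sa2 m p; have := e2_one m p.
  have hz : forall x k, (1%:M : M) (ix x) (ix (flip x k)) = 0.
    by move=> x k; rewrite one_E eq_sym (negPf (flip_neq _ _)).
  rewrite /g /e2 !entB !entZ !hz => h1 h2 h3; lra.
Qed.


Lemma free_labels (L : eqType) (F : L -> M) (r : seq L) (l0 : L) : uniq r ->
  (forall c : L -> R, \sum_(l <- r) c l *: F l = 0 -> forall l, l \in r -> c l = 0) ->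
  free (map F r).
Proof.
move=> Ur H; suff : free (in_tuple (map F r)) by []. apply/freeP => k Hk i.
pose c l := oapp k 0 (insub (index l r) : option 'I_(size (map F r))).
have hi : (i < size r)%N by apply: (leq_trans (ltn_ord i)); rewrite size_map.
have ci : c (nth l0 r i) = k i.
  rewrite /c index_uniq // insubT /=; first exact: ltn_ord.
  by move=> Pi; congr (k _); apply: val_inj.
rewrite -ci; apply: H; last exact: mem_nth.
rewrite (big_nth l0) -(size_map F) big_mkord -[RHS]Hk; apply: eq_bigr => j _.
have hj : (j < size r)%N by apply: (leq_trans (ltn_ord j)); rewrite size_map.
rewrite /c index_uniq // insubT; first exact: ltn_ord.
move=> Pj /=; rewrite (nth_map l0) //; congr (k _ *: _); exact: val_inj.
Qed.


Definition Lb := ((unit + 'I_D) + ('I_D * 'I_D))%type.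
Definition Fl (l : Lb) : M :=
  match l with
  | inl (inl _) => 1%:M
  | inl (inr k) => alpha R D k
  | inr (i, j) => commAs R D i j
  end.
Definition rl : seq Lb := [:: inl (inl tt)] ++ [seq (inl (inr k) : Lb) | k : 'I_D <- enum 'I_D]
  ++ [seq (inr (i, j) : Lb) | i : 'I_D <- enum 'I_D, j : 'I_D <- Lt i].

Lemma X_map : X = map Fl rl.
Proof. by rewrite /cube_basis /rl !map_cat -map_comp map_allpairs. Qed.

Lemma rl_uniq : uniq rl.
Proof.
rewrite /rl cat1s cons_uniq mem_cat negb_or cat_uniq; apply/andP; split.
  apply/andP; split; first by apply/mapP => [[k _]].
  by apply/allpairsPdep => [[i [j [_ _]]]].
apply/and3P; split.
- by rewrite map_inj_uniq ?enum_uniq // => a b [].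
- by apply/hasPn => l /allpairsPdep [i [j [_ _ ->]]]; apply/mapP => [[k _]].
- apply: allpairs_uniq_dep; first exact: enum_uniq.
    by move=> i _; apply: filter_uniq; exact: enum_uniq.
  by move=> [a b] [c d] _ _ /= [-> ->].
Qed.


Lemma X_free : free X.
Proof.
rewrite X_map; apply: (free_labels (inl (inl tt))); first exact: rl_uniq.
move=> c; rewrite /rl !big_cat big_cons big_nil /= addr0 big_map big_allpairs_dep /= => E0.
pose g := fun i j => c (inr (i, j)).
pose a := fun k => c (inl (inr k)).
have E : c (inl (inl tt)) *: 1%:M + \sum_(k <- enum 'I_D) a k *: alpha R D k
   + \sum_(i <- enum 'I_D) \sum_(j <- Lt i) g i j *: commAs R D i j = 0.
  by rewrite -addrA; exact: E0.
have [Sa0 [Sa1 Sa2]] := sum_alpha_e a.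
have c0 : c (inl (inl tt)) = 0.
  have := congr1 e0 E; rewrite /e0 !entD entZ one_E eqxx mulr1.
  have := e0_sumc g; have := Sa0; rewrite /e0 => -> ->; by rewrite !addr0 mxE.
have g0 : forall i j : 'I_D, (i < j)%N -> g i j = 0.
  move=> i j ij; have := congr1 (e2 i j) E.
  have := e2_sumc g ij; have := Sa2 i j; have := e2_one i j.
  rewrite /e2 !entD !entZ => h1 h2 h3.
  have hz : forall x k, (1%:M : M) (ix x) (ix (flip x k)) = 0.
    by move=> x k; rewrite one_E eq_sym (negPf (flip_neq _ _)).
  rewrite !hz !mxE => h4. lra.
have Sc1 : forall m, e1 m (\sum_(i <- enum 'I_D) \sum_(j <- Lt i) g i j *: commAs R D i j) = 0.
  move=> m; rewrite /e1 summxE big1_seq // => i _; rewrite summxE big1_seq // => j /andP [_].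
  by rewrite mem_filter => /andP [ij _]; rewrite entZ g0 // mul0r.
have a0 : forall m, a m = 0.
  move=> m; have := congr1 (e1 m) E; have := Sc1 m; have := Sa1 m.
  rewrite /e1 !entD entZ one_E eq_sym (negPf (flip_neq _ _)) mxE => -> ->; by rewrite mulr0 add0r addr0.
move=> l; rewrite inE mem_cat => /orP [/eqP ->|/orP [/mapP [k _ ->]|/allpairsPdep [i [j [_ Hj ->]]]]].
- exact: c0.
- exact: a0.
- by apply: g0; move: Hj; rewrite mem_filter => /andP [].
Qed.


Lemma count_gt_nat (n N : nat) : (n < N)%N -> count (fun k => (n < k)%N) (iota 0 N) = (N - n.+1)%N.
Proof.
move=> hi; rewrite -{1}(subnKC hi) iotaD count_cat add0n.
rewrite (eq_in_count (a2 := pred0)); last by move=> k; rewrite mem_iota add0n ltnS => /andP [_ h]; rewrite /= ltnNge h.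
rewrite count_pred0 add0n (eq_in_count (a2 := predT)); last by move=> k; rewrite mem_iota => /andP [h _].
by rewrite count_predT size_iota.
Qed.

Lemma count_gt (i : 'I_D) : count (fun j : 'I_D => (i < j)%N) (enum 'I_D) = (D - i.+1)%N.
Proof.
rewrite -(count_map val (fun n => (i < n)%N)) val_enum_ord; exact: count_gt_nat.
Qed.

Lemma size_X : size X = (1 + D + 'C(D, 2))%N.
Proof.
rewrite /cube_basis !size_cat size_map size_enum_ord size_allpairs_dep /= addnA.
congr (_ + _)%N.
rewrite sumnE big_map.
under eq_bigr do rewrite size_filter count_gt.
rewrite -bin2_sum big_mkord big_enum /=.
rewrite (reindex_inj rev_ord_inj) /=; apply: eq_bigr => i _; by rewrite subnSK // subKn // ltnW.
Qed.

End Final.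

Theorem corollary9p8 (R : realFieldType) (D : nat) (hD : (1 <= D)%N) :
  free (cube_basis R D)
  /\ (forall B : 'M[R]_(nv D), A_like R D B <-> B \in <<cube_basis R D>>%VS)
  /\ \dim <<cube_basis R D>>%VS = (1 + D + 'C(D, 2))%N.
Proof.
split; first exact: X_free.
split; first by move=> B; split; [exact: Alike_span | exact: span_Alike].
by have := X_free R D; rewrite /free => /eqP ->; exact: size_X.
Qed.
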